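(* In the linear model setting described in the context, for every $\alpha\in[0,1]$, $$\mathcal R(\hat f_\alpha)\le\sum_{s=1}^Kw_s\mathbb E\big(\langle\boldsymbol X,\boldsymbol\beta^*-\hat{\boldsymbol\beta}\rangle+(b^*_s-\hat b_s)\big)^2+2(1-\sqrt\alpha)\sqrt{\sum_{s=1}^Kw_s(b^*_s-\hat b_s)^2}\sqrt{\sum_{s=1}^Kw_s\Big(\hat b_s-\sum_{s'}w_{s'}\hat b_{s'}\Big)^2}+(1-\sqrt\alpha)^2\sum_{s=1}^Kw_s\Big(\hat b_s-\sum_{s'}w_{s'}\hat b_{s'}\Big)^2.$$
   Context: Model: $Y=\langle\boldsymbol X,\boldsymbol\beta^*\rangle+b^*_S+\xi$, $\boldsymbol X\sim\mathcal N(\boldsymbol0,\boldsymbol\Sigma)$ with $\boldsymbol\Sigma\succ0$, independent of $S\in[K]$, $\xi\sim\mathcal N(0,\sigma^2)$ independent. Observations: for each $s$, $\boldsymbol Y_s=\mathbf X_s\boldsymbol\beta^*+b^*_s\boldsymbol1_{n_s}+\boldsymbol\xi_s$ (i.i.d. $\mathcal N(\boldsymbol0,\boldsymbol\Sigma)$ rows, i.i.d. $\mathcal N(0,\sigma^2)$ noise, all independent); $n=\sum_sn_s$, $w_s=n_s/n$. $(\hat{\boldsymbol\beta},\hat{\boldsymbol b})\in\arg\min_{(\boldsymbol\beta,\boldsymbol b)}\sum_sw_s\frac1{n_s}\|\boldsymbol Y_s-\mathbf X_s\boldsymbol\beta-b_s\boldsymbol1_{n_s}\|_2^2$; $\hat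 f_\alpha(\boldsymbol x,s)=\langle\boldsymbol x,\hat{\boldsymbol\beta}\rangle+\sqrt\alpha\hat b_s+(1-\sqrt\alpha)\sum_{s'}w_{s'}\hat b_{s'}$. Risk (sample fixed): $\mathcal R(f)=\sum_sw_s\mathbb E(\langle\boldsymbol X,\boldsymbol\beta^*\rangle+b^*_s-f(\boldsymbol X,s))^2$ where $\mathbb E$ is over $\boldsymbol X\sim\mathcal N(\boldsymbol0,\boldsymbol\Sigma)$ independent of the sample. *)

(* Defs.v *)
From HB Require Import structures.
From mathcomp Require Import all_boot all_order all_algebra.
From mathcomp Require Import all_classical all_reals all_analysis.
Set Implicit Arguments. Unset Strict Implicit. Unset Printing Implicit Defensive.
Import Order.TTheory GRing.Theory Num.Theory.
Local Open Scope classical_set_scope.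
Local Open Scope ring_scope.

Section Defs.
Context {R : realType}.

Definition inner (d : nat) (x : 'rV[R]_d) (beta : 'cV[R]_d) : R := (x *m beta) 0 0.

Definition sqnorm (m : nat) (v : 'cV[R]_m) : R := \sum_(i < m) v i 0 ^+ 2.

Definition posdef (d : nat) (S : 'M[R]_d) : Prop :=
  S^T = S /\ forall u : 'rV[R]_d, u != 0 -> 0 < (u *m S *m u^T) 0 0.

(* X : T -> R^d is N(0, Sigma) under P: every nonzero linear combination
   <X, u> is measurable with law N(0, u Sigma u^T) (Cramer-Wold definition;
   normal_prob takes the standard deviation). *)
Definition is_gaussian_vector (dd : measure_display) (T : measurableType dd)
  (P : probability T R) (d : nat) (S : 'M[R]_d) (X : T -> 'rV[R]_d) : Prop :=
  forall u : 'cV[R]_d, u != 0 ->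
    measurable_fun [set: T] (fun w => inner (X w) u) /\
    forall A : set R, measurable A ->
      P ((fun w => inner (X w) u) @^-1` A) =
      normal_prob 0 (Num.sqrt ((u^T *m S *m u) 0 0)) A.

Definition weight (K : nat) (n : 'I_K -> nat) (s : 'I_K) : R :=
  (n s)%:R / (\sum_(s' < K) n s')%:R.

Definition ls_obj (K d : nat) (n : 'I_K -> nat)
  (Xs : forall s : 'I_K, 'M[R]_(n s, d)) (Ys : forall s : 'I_K, 'cV[R]_(n s))
  (beta : 'cV[R]_d) (b : 'I_K -> R) : R :=
  \sum_(s < K) weight n s * (n s)%:R^-1 *
     sqnorm (Ys s - Xs s *m beta - b s *: const_mx 1).

Definition wmean (K : nat) (n : 'I_K -> nat) (b : 'I_K -> R) : R :=
  \sum_(s' < K) weight n s' * b s'.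

Definition f_alpha (K d : nat) (n : 'I_K -> nat) (alpha : R)
  (betah : 'cV[R]_d) (bh : 'I_K -> R) (x : 'rV[R]_d) (s : 'I_K) : R :=
  inner x betah + Num.sqrt alpha * bh s + (1 - Num.sqrt alpha) * wmean n bh.

(* risk R(f), expectation over X ~ P independent of the (fixed) sample *)
Definition risk (dd : measure_display) (T : measurableType dd)
  (P : probability T R) (K d : nat) (n : 'I_K -> nat) (X : T -> 'rV[R]_d)
  (betastar : 'cV[R]_d) (bstar : 'I_K -> R) (f : 'rV[R]_d -> 'I_K -> R) : \bar R :=
  (\sum_(s < K) (weight n s)%:E *
     'E_P[fun w => ((inner (X w) betastar + bstar s - f (X w) s) ^+ 2)%R])%E.

End Defs.

(* Main.v *)
Require Import Defs.
From HB Require Import structures.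
From mathcomp Require Import all_boot all_order all_algebra.
From mathcomp Require Import ring lra.
From mathcomp Require Import all_classical all_reals all_analysis.
From mathcomp Require Import measurable_realfun.
Import Order.TTheory GRing.Theory Num.Theory.
Local Open Scope classical_set_scope.
Local Open Scope ring_scope.

Lemma cs_sq (R : realType) (K : nat) (w a b : 'I_K -> R) :
  (forall i, 0 <= w i) ->
  (\sum_i w i * a i * b i) ^+ 2 <=
  (\sum_i w i * a i ^+ 2) * (\sum_i w i * b i ^+ 2).
Proof.
move=> w0.
have E : \sum_i \sum_j (w i * w j * (a i * b j - a j * b i) ^+ 2) =
  \sum_i \sum_j (w i * a i ^+ 2 * (w j * b j ^+ 2)) +
  \sum_i \sum_j (w j * a j ^+ 2 * (w i * b i ^+ 2)) -
  2 * \sum_i \sum_j (w i * a i * b i * (w j * a j * b j)).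
  rewrite mulr_sumr -big_split /= -sumrN -big_split /=. apply: eq_bigr => i _.
  rewrite mulr_sumr -big_split /= -sumrN -big_split /=; apply: eq_bigr => j _; ring.
rewrite [X in _ + X - _](exchange_big) /= in E.
have H1 : (\sum_i w i * a i ^+ 2) * (\sum_i w i * b i ^+ 2) =
   \sum_i \sum_j (w i * a i ^+ 2 * (w j * b j ^+ 2)).
  by rewrite mulr_suml; apply: eq_bigr => i _; rewrite mulr_sumr.
have H2 : (\sum_i w i * a i * b i) ^+ 2 =
   \sum_i \sum_j (w i * a i * b i * (w j * a j * b j)).
  by rewrite expr2 mulr_suml; apply: eq_bigr => i _; rewrite mulr_sumr.
have : 0 <= \sum_i \sum_j (w i * w j * (a i * b j - a j * b i) ^+ 2).
  by apply: sumr_ge0 => i _; apply: sumr_ge0 => j _; rewrite mulr_ge0 ?sqr_ge0 ?mulr_ge0.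
rewrite E; rewrite -H1 -H2 => h. lra.
Qed.

Lemma cs (R : realType) (K : nat) (w a b : 'I_K -> R) :
  (forall i, 0 <= w i) ->
  \sum_i w i * a i * b i <=
  Num.sqrt (\sum_i w i * a i ^+ 2) * Num.sqrt (\sum_i w i * b i ^+ 2).
Proof.
move=> w0.
have hA : 0 <= \sum_i w i * a i ^+ 2 by apply: sumr_ge0 => i _; rewrite mulr_ge0 ?sqr_ge0.
have hB : 0 <= \sum_i w i * b i ^+ 2 by apply: sumr_ge0 => i _; rewrite mulr_ge0 ?sqr_ge0.
rewrite -sqrtrM //; apply: (le_trans (ler_norm _)).
by rewrite -sqrtr_sqr ler_sqrt ?mulr_ge0 // cs_sq.
Qed.

Lemma sumE (R : realType) (dd : measure_display) (T : measurableType dd)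
  (P : probability T R) (K : nat) (w : 'I_K -> R) (F : 'I_K -> T -> R) :
  (forall s, 0 <= w s) -> (forall s x, 0 <= F s x) ->
  (forall s, measurable_fun setT (F s)) ->
  (\sum_(s < K) (w s)%:E * 'E_P[F s] =
   \int[P]_x (\sum_(s < K) w s * F s x)%:E)%E.
Proof.
move=> w0 F0 mF.
have hE : forall G, ('E_P[G] = \int[P]_x (G x)%:E)%E by move=> G; rewrite unlock.
under eq_bigr do rewrite hE.
rewrite (eq_integral (fun x => \sum_(s < K) (w s * F s x)%:E)%E); last first.
  by move=> x _; rewrite sumEFin.
rewrite ge0_integral_sum //; last first.
- by move=> s x _; rewrite lee_fin mulr_ge0.
- by move=> s; apply/measurable_EFinP; apply: measurable_funM => //; exact: measurable_cst.
apply: eq_bigr => s _.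
under eq_integral do rewrite EFinM.
rewrite ge0_integralZl_EFin //.
- by move=> x _; rewrite lee_fin.
- exact/measurable_EFinP.
Qed.

Theorem lemma15 (R : realType) (dd : measure_display) (T : measurableType dd)
  (P : probability T R) (K d : nat) (Sigma : 'M[R]_d) (X : T -> 'rV[R]_d)
  (betastar : 'cV[R]_d) (bstar : 'I_K -> R)
  (n : 'I_K -> nat) (Xs : forall s : 'I_K, 'M[R]_(n s, d))
  (Ys : forall s : 'I_K, 'cV[R]_(n s))
  (betah : 'cV[R]_d) (bh : 'I_K -> R) (alpha : R) :
  (0 < K)%N ->
  posdef Sigma ->
  is_gaussian_vector P Sigma X ->
  (forall s, (0 < n s)%N) ->
  (exists xi : forall s : 'I_K, 'cV[R]_(n s),
     forall s, Ys s = Xs s *m betastar + bstar s *: const_mx 1 + xi s) ->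
  (forall (beta : 'cV[R]_d) (b : 'I_K -> R),
     ls_obj Xs Ys betah bh <= ls_obj Xs Ys beta b) ->
  0 <= alpha <= 1 ->
  (risk P n X betastar bstar (f_alpha n alpha betah bh) <=
   (\sum_(s < K) (weight n s)%:E *
      'E_P[fun w => ((inner (X w) (betastar - betah) + (bstar s - bh s)) ^+ 2)%R])
   + (2 * (1 - Num.sqrt alpha)
        * Num.sqrt (\sum_(s < K) weight n s * (bstar s - bh s) ^+ 2)
        * Num.sqrt (\sum_(s < K) weight n s * (bh s - wmean n bh) ^+ 2))%:E
   + ((1 - Num.sqrt alpha) ^+ 2
        * \sum_(s < K) weight n s * (bh s - wmean n bh) ^+ 2)%:E)%E.
Proof.
move=> hK _ hG hn _ _ /andP[a0 a1].
have Npos : (0 < \sum_(s < K) n s)%N.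
  by rewrite (bigD1 (Ordinal hK)) //=; exact: ltn_addr (hn _).
have w0 : forall s, 0 <= weight (R:=R) n s by move=> s; rewrite /weight divr_ge0.
have w1 : \sum_s weight (R:=R) n s = 1.
  by rewrite /weight -mulr_suml -natr_sum divff // pnatr_eq0 -lt0n.
have sD : \sum_s weight (R:=R) n s * (bh s - wmean n bh) = 0.
  under eq_bigr do rewrite mulrBr.
  by rewrite sumrB -mulr_suml w1 mul1r /wmean subrr.
set c := 1 - Num.sqrt alpha.
have c0 : 0 <= c by rewrite /c subr_ge0 -sqrtr1 ler_sqrt.
have mL : measurable_fun setT (fun x => inner (X x) (betastar - betah)).
  case: (eqVneq (betastar - betah) 0) => [->|h]; last exact: (hG _ h).1.
  rewrite (_ : (fun x => _) = cst 0); first exact: measurable_cst.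
  by apply/funext => x; rewrite /inner mulmx0 mxE.
have mF : forall a, measurable_fun setT
    (fun x => (inner (X x) (betastar - betah) + a) ^+ 2).
  move=> a; apply: measurable_funX; apply: measurable_funD => //.
have hrisk : risk P n X betastar bstar (f_alpha n alpha betah bh) =
  (\sum_(s < K) (weight n s)%:E * 'E_P[fun x => ((inner (X x) (betastar - betah)
     + ((bstar s - bh s) + c * (bh s - wmean n bh))) ^+ 2)%R])%E.
  rewrite /risk; apply: eq_bigr => s _; congr (_ * _)%E; congr expectation.
  apply/funext => x; rewrite /f_alpha /inner mulmxBr /c !mxE; ring.
rewrite hrisk.
rewrite (@sumE _ _ _ P K (weight (R:=R) n) (fun s x => (inner (X x) (betastar - betah) +
     ((bstar s - bh s) + c * (bh s - wmean n bh))) ^+ 2)) //; last first.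
  by move=> s x; rewrite sqr_ge0.
rewrite (@sumE _ _ _ P K (weight (R:=R) n) (fun s x => (inner (X x) (betastar - betah) +
     (bstar s - bh s)) ^+ 2)) //; last first.
  by move=> s x; rewrite sqr_ge0.
set A := \sum_(s < K) weight n s * (bstar s - bh s) ^+ 2.
set B := \sum_(s < K) weight n s * (bh s - wmean n bh) ^+ 2.
rewrite -addeA -EFinD.
set k := (2 * c * Num.sqrt A * Num.sqrt B + c ^+ 2 * B).
have hc : (\int[P]_x (k%:E) = k%:E)%E.
  by have := integral_cst P measurableT k%:E; rewrite /= probability_setT mule1.
have hB : 0 <= B by apply: sumr_ge0 => s _; rewrite mulr_ge0 ?sqr_ge0.
have k0 : 0 <= k.
  by rewrite /k addr_ge0 // ?mulr_ge0 ?sqrtr_ge0 ?sqr_ge0 // mulr_ge0.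
have mS : forall a : 'I_K -> R, measurable_fun setT (fun x =>
   (\sum_(s < K) weight n s * (inner (X x) (betastar - betah) + a s) ^+ 2)%:E).
  move=> a; apply/measurable_EFinP; apply: measurable_sum => s.
  by apply: measurable_funM => //; exact: measurable_cst.
have mS1 := mS (fun s => bstar s - bh s).
have mS2 := mS (fun s => bstar s - bh s + c * (bh s - wmean n bh)).
rewrite /= in mS1 mS2.
rewrite -[X in (_ <= _ + X)%E]hc -ge0_integralD //.
all: try by move=> x _; rewrite lee_fin ?sumr_ge0 // => s _; rewrite mulr_ge0 ?sqr_ge0.
apply: ge0_le_integral => //.
- by move=> x _; rewrite lee_fin sumr_ge0 // => s _; rewrite mulr_ge0 ?sqr_ge0.
- by apply: emeasurable_funD => //; exact: measurable_cst.
move=> x _; rewrite -EFinD lee_fin.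
set L := inner (X x) (betastar - betah).
have expand : \sum_(s < K) weight n s * (L + (bstar s - bh s + c * (bh s - wmean n bh))) ^+ 2
  = \sum_(s < K) weight n s * (L + (bstar s - bh s)) ^+ 2
    + 2 * c * (\sum_(s < K) weight n s * (bstar s - bh s) * (bh s - wmean n bh))
    + 2 * c * L * (\sum_(s < K) weight n s * (bh s - wmean n bh))
    + c ^+ 2 * B.
  rewrite /B !mulr_sumr -!big_split /=; apply: eq_bigr => s _; ring.
rewrite expand sD mulr0 addr0.
have hC := @cs R K (weight n) (fun s => bstar s - bh s) (fun s => bh s - wmean n bh) w0.
have := ler_wpM2l (mulr_ge0 (ler0n _ 2) c0) hC.
rewrite /k -/A -/B; lra.
Qed.
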